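(* Let $D_K$ be a relative $K$-entropy satisfying Properties (a), (b), (c) and (d) below, and let $H_K$ be the associated conditional entropy, defined by one of the two forms below. Then for every POVM $X=\{X_j\}$ on $\mathcal{H}_A$ and every density operator $\rho_{AB}$, $H_K(X|B)\ge0$, with equality if the operators $\mathrm{Tr}_A(X_j\rho_{AB})$ (for the different $j$) have mutually orthogonal supports.
   Context: All Hilbert spaces are finite-dimensional; $\log$ has an arbitrary but fixed base. A relative $K$-entropy $D_K$ assigns to every pair $(S,T)$ of positive semidefinite operators on a common Hilbert space an extended real number $D_K(S\|T)$. Properties: (a) for every trace-preserving completely positive map $\mathcal{E}$ (possibly between different spaces), $D_K(\mathcal{E}(S)\|\mathcal{E}(T))\le D_K(S\|T)$; (b) for positive semidefinite $S,T$ on $\mathcal{H}$ and $T'$ on $\mathcal{H}'$, $D_K(S\oplus 0\,\|\,T\oplus T')=D_K(S\|T)$; (c) for every constant $c>0$, $D_K(S\|cT)=D_K(S\|T)+\log\frac1c$; (d) $D_K(\rho\|\rho)=0$ for every density operator $\rho$. The conditional $K$-entropy of a density operator $\rho_{AB}$ is either $H_K(A|B)=-D_K(\rho_{AB}\|\mathbb{1}_A\otimes\rho_B)$ for all $\rho_{AB}$, or $H_K(A|B)=\max_{\sigma_B}[-D_K(\rho_{AB}\|\mathbb{1}_A\otimes\sigma_B)]$ for all $\rho_{AB}$, maximum over density operators $\sigma_B$. For a POVM $X=\{X_j\}$ on $\mathcal{H}_A$ ($X_j\ge0$, $\sum_jX_j=\mathbb{1}$), let $\mathcal{X}:\rho_A\mapsto\sum_j|j\rangle\langle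 j|_X\,\mathrm{Tr}(X_j\rho_A)$ with $\{|j\rangle\}$ orthonormal in a register $\mathcal{H}_X$; $H_K(X|B)$ denotes $H_K$ of the state $(\mathcal{X}\otimes\mathcal{I})(\rho_{AB})$ (register $X$ given $B$). *)

(* Defs.v *)
From mathcomp Require Import all_boot all_order all_algebra.
From mathcomp Require Import complex.
From mathcomp Require Import mathcomp_extra boolp classical_sets reals ereal exp.

Set Implicit Arguments.
Unset Strict Implicit.
Unset Printing Implicit Defensive.

Import Order.TTheory GRing.Theory Num.Theory.
Local Open Scope ring_scope.

(* Finite-dimensional Hilbert spaces are modelled as C^n, C = R[i] for a
   realType R; operators on C^n are matrices 'M[R[i]]_n.  The tensor
   product C^a (x) C^b is C^(a*b) with the basis ordering given by
   MathComp's [mxvec_index]. *)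

Section QDefs.
Variable R : realType.
Local Notation C := R[i].

Definition adjmx m n (A : 'M[C]_(m, n)) : 'M[C]_(n, m) := (map_mx Num.conj A)^T.

Definition psd n (M : 'M[C]_n) : Prop :=
  adjmx M = M /\ forall x : 'cV[C]_n, 0 <= (adjmx x *m M *m x) 0 0.

Definition density n (rho : 'M[C]_n) : Prop := psd rho /\ \tr rho = 1.

Definition pidx m n (i : 'I_m) (j : 'I_n) : 'I_(m * n) := mxvec_index i j.
Definition unpair m n (p : 'I_(m * n)) : 'I_m * 'I_n :=
  enum_val (cast_ord (esym (mxvec_cast m n)) p).

Definition tensmx' m n (A : 'M[C]_m) (B : 'M[C]_n) : 'M[C]_(m * n) :=
  \matrix_(p, q) (A (unpair p).1 (unpair q).1 * B (unpair p).2 (unpair q).2).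

Definition ptraceA a b (M : 'M[C]_(a * b)) : 'M[C]_b :=
  \matrix_(s, t) \sum_(i < a) M (pidx i s) (pidx i t).

(* (id_k (x) E)(M) for E : 'M_n -> 'M_m *)
Definition ampl_left k n m (E : 'M[C]_n -> 'M[C]_m) (M : 'M[C]_(k * n))
  : 'M[C]_(k * m) :=
  \matrix_(p, q)
    E (\matrix_(i, j) M (pidx (unpair p).1 i) (pidx (unpair q).1 j))
      (unpair p).2 (unpair q).2.

(* (E (x) id_b)(M) for E : 'M_a -> 'M_k *)
Definition ampl_right a k b (E : 'M[C]_a -> 'M[C]_k) (M : 'M[C]_(a * b))
  : 'M[C]_(k * b) :=
  \matrix_(p, q)
    E (\matrix_(i, j) M (pidx i (unpair p).2) (pidx j (unpair q).2))
      (unpair p).1 (unpair q).1.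

Definition is_linear n m (E : 'M[C]_n -> 'M[C]_m) : Prop :=
  forall (c : C) (X Y : 'M[C]_n), E (c *: X + Y) = c *: E X + E Y.

Definition completely_positive n m (E : 'M[C]_n -> 'M[C]_m) : Prop :=
  forall k (P : 'M[C]_(k * n)), psd P -> psd (ampl_left E P).

Definition trace_preserving n m (E : 'M[C]_n -> 'M[C]_m) : Prop :=
  forall X : 'M[C]_n, \tr (E X) = \tr X.

Definition cptp n m (E : 'M[C]_n -> 'M[C]_m) : Prop :=
  [/\ is_linear E, completely_positive E & trace_preserving E].

Definition logb (bs x : R) : R := ln x / ln bs.

Definition relEnt := forall n : nat, 'M[C]_n -> 'M[C]_n -> \bar R.

Definition propA (D : relEnt) : Prop :=
  forall n m (E : 'M[C]_n -> 'M[C]_m) (S T : 'M[C]_n),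
    cptp E -> psd S -> psd T -> (D m (E S) (E T) <= D n S T)%E.

Definition propB (D : relEnt) : Prop :=
  forall n n' (S T : 'M[C]_n) (T' : 'M[C]_n'),
    psd S -> psd T -> psd T' ->
    D (n + n')%N (block_mx S 0 0 0) (block_mx T 0 0 T') = D n S T.

Definition propC (bs : R) (D : relEnt) : Prop :=
  forall n (S T : 'M[C]_n) (c : R), psd S -> psd T -> 0 < c ->
    D n S (Complex c 0 *: T) = (D n S T + (logb bs c^-1)%:E)%E.

Definition propD (D : relEnt) : Prop :=
  forall n (rho : 'M[C]_n), density rho -> D n rho rho = 0%E.

(* conditional K-entropy H_K(A|B) of rho_AB on C^a (x) C^b;
   form = true : H = - D(rho_AB || 1_A (x) rho_B)
   form = false: H = max_{sigma_B} - D(rho_AB || 1_A (x) sigma_B)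
                 (written as a supremum, which is the maximum when attained) *)
Definition condEnt (D : relEnt) (form : bool) a b (rho : 'M[C]_(a * b)) : \bar R :=
  if form then (- D (a * b)%N rho (tensmx' 1%:M (ptraceA rho)))%E
  else ereal_sup [set (- D (a * b)%N rho (tensmx' 1%:M sigma))%E
                 | sigma in [set sigma : 'M[C]_b | density sigma]].

Definition povm a k (X : 'I_k -> 'M[C]_a) : Prop :=
  (forall j, psd (X j)) /\ \sum_(j < k) X j = 1%:M.

Definition measch a k (X : 'I_k -> 'M[C]_a) (rhoA : 'M[C]_a) : 'M[C]_k :=
  \matrix_(j, j') (if j == j' then \tr (X j *m rhoA) else 0).

Definition condEntX (D : relEnt) (form : bool) a b k (X : 'I_k -> 'M[C]_a)
  (rho : 'M[C]_(a * b)) : \bar R :=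
  condEnt D form (ampl_right (measch X) rho).

Definition orth_supp n (M N : 'M[C]_n) : Prop :=
  forall x y : 'cV[C]_n, adjmx (M *m x) *m (N *m y) = 0.

End QDefs.

(* Main.v *)
Require Import Defs.
From mathcomp Require Import all_boot all_order all_algebra.
From mathcomp Require Import complex.
From mathcomp Require Import mathcomp_extra boolp classical_sets reals ereal exp.
From mathcomp Require Import sesquilinear spectral ring.
Import Order.TTheory GRing.Theory Num.Theory Num.Def.
Local Open Scope ring_scope.

Set Implicit Arguments.
Unset Strict Implicit.
Unset Printing Implicit Defensive.

Section Aux.
Variable R : realType.
Local Notation C := R[i].

Lemma unpair_pidx m n (i : 'I_m) (j : 'I_n) : unpair (pidx i j) = (i, j).
Proof. by rewrite /unpair /pidx /mxvec_index cast_ordK enum_rankK. Qed.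

Lemma pidx_unpair m n (p : 'I_(m * n)) : pidx (unpair p).1 (unpair p).2 = p.
Proof. by case/mxvec_indexP: p => i j; rewrite unpair_pidx. Qed.

Lemma pidx_eq m n (i i' : 'I_m) (j j' : 'I_n) :
  (pidx i j == pidx i' j') = (i == i') && (j == j').
Proof.
apply/eqP/andP => [/(congr1 (@unpair _ _))|[/eqP -> /eqP ->]] //.
by rewrite !unpair_pidx => -[-> ->].
Qed.

Lemma sum_pidx m n (F : 'I_(m * n) -> C) :
  \sum_p F p = \sum_i \sum_j F (pidx i j).
Proof.
rewrite pair_bigA /=.
rewrite (reindex (fun ij : 'I_m * 'I_n => pidx ij.1 ij.2)) //=.
exists (@unpair m n) => [[i j] _ | p _]; first by rewrite unpair_pidx.
exact: pidx_unpair.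
Qed.

Lemma adjmxE m n (A : 'M[C]_(m, n)) i j : adjmx A i j = (A j i)^*.
Proof. by rewrite /adjmx !mxE. Qed.

Lemma adjmxK m n (A : 'M[C]_(m, n)) : adjmx (adjmx A) = A.
Proof. by apply/matrixP => i j; rewrite !adjmxE conjCK. Qed.

Lemma adjmxM m n p (A : 'M[C]_(m, n)) (B : 'M[C]_(n, p)) :
  adjmx (A *m B) = adjmx B *m adjmx A.
Proof.
apply/matrixP => i j; rewrite !adjmxE !mxE rmorph_sum; apply: eq_bigr => l _.
by rewrite rmorphM !adjmxE mulrC.
Qed.

Lemma adjmxD m n (A B : 'M[C]_(m, n)) : adjmx (A + B) = adjmx A + adjmx B.
Proof. by apply/matrixP => i j; rewrite [in RHS]mxE !adjmxE mxE rmorphD. Qed.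

Lemma adjmxN m n (A : 'M[C]_(m, n)) : adjmx (- A) = - adjmx A.
Proof. by apply/matrixP => i j; rewrite [in RHS]mxE !adjmxE mxE rmorphN. Qed.

Lemma adjmx0 m n : adjmx (0 : 'M[C]_(m, n)) = 0.
Proof. by apply/matrixP => i j; rewrite !adjmxE !mxE rmorph0. Qed.

Lemma adjmx1 n : adjmx (1%:M : 'M[C]_n) = 1%:M.
Proof. by apply/matrixP => i j; rewrite !adjmxE !mxE eq_sym; case: eqP; rewrite ?rmorph1 ?rmorph0. Qed.


Lemma tstar_adj m n (A : 'M[C]_(m, n)) : map_mx conjC (A ^T) = adjmx A.
Proof. by apply/matrixP => i j; rewrite adjmxE !mxE. Qed.

Lemma psd_herm n (P : 'M[C]_n) : psd P -> forall i j, (P i j)^* = P j i.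
Proof. by case=> h _ i j; rewrite -adjmxE h. Qed.

Lemma psd_congr n m (P : 'M[C]_n) (W : 'M[C]_(n, m)) :
  psd P -> psd (adjmx W *m P *m W).
Proof.
case=> hP fP; split.
  by rewrite !adjmxM adjmxK hP mulmxA.
move=> x; rewrite -!mulmxA mulmxA -adjmxM mulmxA; exact: fP.
Qed.

Lemma psd0 n : psd (0 : 'M[C]_n).
Proof. by split; [rewrite adjmx0 | move=> x; rewrite mulmx0 mul0mx mxE]. Qed.

Lemma psdD n (P Q : 'M[C]_n) : psd P -> psd Q -> psd (P + Q).
Proof.
case=> hP fP [hQ fQ]; split; first by rewrite adjmxD hP hQ.
by move=> x; rewrite mulmxDr mulmxDl mxE addr_ge0.
Qed.

Lemma psd_sum n I (r : seq I) (Pr : pred I) (F : I -> 'M[C]_n) :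
  (forall i, Pr i -> psd (F i)) -> psd (\sum_(i <- r | Pr i) F i).
Proof.
move=> h; apply: (big_ind (fun M => psd M)) => //; [exact: psd0 | exact: psdD].
Qed.

Lemma psd1 n : psd (1%:M : 'M[C]_n).
Proof.
split; first exact: adjmx1.
move=> x; rewrite mulmx1 mxE sumr_ge0 // => i _.
by rewrite adjmxE mulrC -normCK exprn_ge0.
Qed.

Lemma psd_adjK n m (W : 'M[C]_(n, m)) : psd (adjmx W *m W).
Proof. by have := psd_congr W (psd1 n); rewrite mulmx1. Qed.

Lemma psd_diag n (P : 'M[C]_n) i : psd P -> 0 <= P i i.
Proof.
case=> _ /(_ (delta_mx i 0 : 'cV[C]_n)).
suff -> : (adjmx (delta_mx i 0 : 'cV[C]_n) *m P *m (delta_mx i 0 : 'cV[C]_n)) 0 0 = P i i by [].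
rewrite mxE (bigD1 i) //= big1 => [|l /negbTE hl]; last first.
  by rewrite !mxE hl mulr0.
rewrite addr0 mxE (bigD1 i) //= big1 => [|l /negbTE hl]; last first.
  by rewrite adjmxE !mxE hl rmorph0 mul0r.
by rewrite addr0 adjmxE !mxE !eqxx rmorph1 mul1r mulr1.
Qed.

Lemma psd_tr n (P : 'M[C]_n) : psd P -> 0 <= \tr P.
Proof. by move=> h; rewrite /mxtrace sumr_ge0 // => i _; exact: psd_diag. Qed.

Lemma psd_scale n (P : 'M[C]_n) (c : C) : 0 <= c -> psd P -> psd (c *: P).
Proof.
move=> c0 hP0; have hh := psd_herm hP0; case: hP0 => hP fP; split.
  apply/matrixP => i j; rewrite adjmxE !mxE rmorphM /= hh.
  by rewrite conj_Creal ?ger0_real.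
by move=> x; rewrite -scalemxAr -scalemxAl mxE mulr_ge0.
Qed.

Lemma psd_factor n (Y : 'M[C]_n) : psd Y -> exists K : 'M[C]_n, Y = adjmx K *m K.
Proof.
move=> hY; have hn : Y \is normalmx.
  by apply/normalmxP; rewrite tstar_adj hY.1.
have := orthomx_spectralP hn.
set U := spectralmx Y; set d := spectral_diag Y => eY.
have Uu : U \is unitarymx := spectral_unitarymx Y.
have eU : invmx U = adjmx U by rewrite invmx_unitary // tstar_adj.
rewrite eU in eY.
have d0 : forall l, 0 <= d 0 l.
  move=> l; have := psd_diag l (psd_congr (adjmx U) hY).
  rewrite adjmxK eY !mulmxA.
  have UU : U *m adjmx U = 1%:M by have /unitarymxP := Uu; rewrite tstar_adj.
  by rewrite UU mul1mx -mulmxA UU mulmx1 mxE eqxx mulr1n.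
exists (diag_mx (\row_l sqrtC (d 0 l)) *m U).
rewrite adjmxM eY -!mulmxA; congr (_ *m _); rewrite mulmxA; congr (_ *m _).
apply/matrixP => i j; rewrite mul_mx_diag [RHS]mxE adjmxE !mxE.
case: (eqVneq i j) => [->|hij]; last first.
  by rewrite !mulr0n rmorph0 mul0r.
rewrite !mulr1n conj_Creal ?ger0_real ?sqrtC_ge0 //.
by rewrite -expr2 sqrtCK.
Qed.


Definition Pg n m (c : 'I_m -> bool) (f : 'I_m -> 'I_n) : 'M[C]_(n, m) :=
  \matrix_(r, s) (c s && (r == f s))%:R.

Lemma Pg_sel n m m' (c : 'I_m -> bool) (f : 'I_m -> 'I_n)
  (c' : 'I_m' -> bool) (f' : 'I_m' -> 'I_n) (P : 'M[C]_n) s t :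
  (adjmx (Pg c f) *m P *m Pg c' f') s t =
  if c s && c' t then P (f s) (f' t) else 0.
Proof.
rewrite mxE (bigD1 (f' t)) //= big1 => [|r /negbTE hr]; last first.
  by rewrite [Pg _ _ _ _]mxE hr andbF mulr0.
rewrite addr0 [Pg _ _ _ _]mxE eqxx andbT mxE (bigD1 (f s)) //= big1 => [|r /negbTE hr]; last first.
  by rewrite adjmxE mxE hr andbF rmorph0 mul0r.
rewrite addr0 adjmxE mxE eqxx andbT.
by case: (c s); case: (c' t); rewrite /= ?rmorph1 ?rmorph0 ?mul1r ?mulr1 ?mul0r ?mulr0.
Qed.

Lemma psd_pullback n m (c : 'I_m -> bool) (f : 'I_m -> 'I_n) (P : 'M[C]_n) :
  psd P -> psd (\matrix_(s, t) if c s && c t then P (f s) (f t) else 0).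
Proof.
move=> hP; have := psd_congr (Pg c f) hP.
by have -> : adjmx (Pg c f) *m P *m Pg c f = \matrix_(s, t) if c s && c t then P (f s) (f t) else 0
  by apply/matrixP => s t; rewrite Pg_sel mxE.
Qed.

Lemma psd_omega N a b (P : 'M[C]_N) (Y : 'M[C]_a) (g : 'I_a -> 'I_b -> 'I_N) :
  psd P -> psd Y ->
  psd (\matrix_(s, t) \sum_i \sum_i' Y i i' * P (g i' s) (g i t)).
Proof.
move=> hP /psd_factor [K ->].
pose W l := \sum_i (K l i)^* *: Pg xpredT (g i).
suff -> : \matrix_(s, t) \sum_i \sum_i' (adjmx K *m K) i i' * P (g i' s) (g i t)
  = \sum_l adjmx (W l) *m P *m W l.
  by apply: psd_sum => l _; exact: psd_congr.
apply/matrixP => s t; rewrite mxE summxE.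
have eW : forall l, adjmx (W l) *m P *m W l =
   \sum_i \sum_i' (K l i * (K l i')^*) *: (adjmx (Pg xpredT (g i)) *m P *m Pg xpredT (g i')).
  move=> l; rewrite /W.
  have adjS : forall (F : 'I_a -> 'M[C]_(N, b)), adjmx (\sum_i F i) = \sum_i adjmx (F i).
    by move=> F; apply: big_morph; [exact: adjmxD | exact: adjmx0].
  rewrite adjS mulmx_suml mulmx_suml; apply: eq_bigr => i _.
  rewrite mulmx_sumr; apply: eq_bigr => i' _.
  have -> : adjmx ((K l i)^* *: Pg xpredT (g i)) = K l i *: adjmx (Pg xpredT (g i)).
    by apply/matrixP => x y; rewrite adjmxE [in RHS]mxE adjmxE [X in conjC X]mxE rmorphM /= conjCK.
  by rewrite -scalemxAl -scalemxAl -scalemxAr scalerA.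
have eW' : forall l, (adjmx (W l) *m P *m W l) s t =
   \sum_i \sum_i' K l i * (K l i')^* * P (g i s) (g i' t).
  move=> l; rewrite eW summxE; apply: eq_bigr => i _.
  by rewrite summxE; apply: eq_bigr => i' _; rewrite mxE Pg_sel.
rewrite (eq_bigr _ (fun l _ => eW' l)).
rewrite [LHS](eq_bigr (fun i => \sum_i' \sum_l (K l i)^* * K l i' * P (g i' s) (g i t))); last first.
  move=> i _; apply: eq_bigr => i' _; rewrite mxE mulr_suml; apply: eq_bigr => l _.
  by rewrite adjmxE.
rewrite [LHS](eq_bigr (fun i => \sum_l \sum_i' (K l i)^* * K l i' * P (g i' s) (g i t))); last first.
  by move=> i _; rewrite exchange_big.
rewrite exchange_big /=; apply: eq_bigr => l _.
rewrite exchange_big /=; apply: eq_bigr => i _; apply: eq_bigr => i' _.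
by rewrite (mulrC (K l i)).
Qed.


Lemma adjmx_row m n1 n2 (A : 'M[C]_(m, n1)) (B : 'M[C]_(m, n2)) :
  adjmx (row_mx A B) = col_mx (adjmx A) (adjmx B).
Proof.
apply/matrixP => i j; rewrite adjmxE.
by rewrite -(splitK i); case: (split i) => i'; rewrite ?row_mxEl ?row_mxEr ?col_mxEu ?col_mxEd adjmxE.
Qed.

Lemma psd_block n n' (S : 'M[C]_n) (T : 'M[C]_n') :
  psd S -> psd T -> psd (block_mx S 0 0 T).
Proof.
move=> hS hT.
have e : block_mx S 0 0 T =
  adjmx (row_mx 1%:M 0) *m S *m row_mx 1%:M 0 + adjmx (row_mx 0 1%:M) *m T *m row_mx 0 1%:M.
  by rewrite !adjmx_row !adjmx1 !adjmx0 !mul_col_mx !mul1mx !mul0mx !mul_mx_row !mulmx1 !mulmx0 -!row_mx0 add_col_mx !add_row_mx !addr0 !add0r.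
by rewrite e; apply: psdD; apply: psd_congr.
Qed.

Definition Fsum N (M : 'M[C]_(N + N)) : 'M[C]_N := ulsubmx M + drsubmx M.

Lemma cptp_Fsum N : cptp (@Fsum N).
Proof.
split.
- by move=> c X Y; apply/matrixP => i j; rewrite !mxE; ring.
- move=> k P hP.
  have -> : ampl_left (@Fsum N) P =
    \matrix_(p, q) (if true && true then P (pidx (unpair p).1 (lshift N (unpair p).2))
                                           (pidx (unpair q).1 (lshift N (unpair q).2)) else 0)
  + \matrix_(p, q) (if true && true then P (pidx (unpair p).1 (rshift N (unpair p).2))
                                           (pidx (unpair q).1 (rshift N (unpair q).2)) else 0).
    by apply/matrixP => p q; rewrite !mxE.
  by apply: psdD; apply: (psd_pullback xpredT).
- by move=> X; rewrite /Fsum mxtraceD -{3}[X]submxK mxtrace_block.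
Qed.

Lemma antimono (D : relEnt R) : propA D -> propB D ->
  forall n (S T T2 : 'M[C]_n), psd S -> psd T -> psd (T2 - T) ->
  (D n S T2 <= D n S T)%E.
Proof.
move=> hA hB n S T T2 hS hT hT2.
have := hA _ _ (@Fsum n) (block_mx S 0 0 0) (block_mx T 0 0 (T2 - T)) (cptp_Fsum n)
  (psd_block hS (psd0 n)) (psd_block hT hT2).
rewrite hB // /Fsum !block_mxKul !block_mxKdr addr0.
by rewrite addrC subrK.
Qed.


Definition Dg k b (nu : 'I_k -> 'M[C]_b) : 'M[C]_(k * b) :=
  \matrix_(p, q) if (unpair p).1 == (unpair q).1
                 then nu (unpair p).1 (unpair p).2 (unpair q).2 else 0.

Lemma DgE k b (nu : 'I_k -> 'M[C]_b) j s j' t :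
  Dg nu (pidx j s) (pidx j' t) = if j == j' then nu j s t else 0.
Proof. by rewrite mxE !unpair_pidx /=; case: eqP => // ->. Qed.

Lemma psd_Dg k b (nu : 'I_k -> 'M[C]_b) : (forall j, psd (nu j)) -> psd (Dg nu).
Proof.
move=> h.
have -> : Dg nu = \sum_j \matrix_(p, q)
   (if ((unpair p).1 == j) && ((unpair q).1 == j)
    then nu j (unpair p).2 (unpair q).2 else 0).
  apply/matrixP => p q; rewrite summxE mxE (bigD1 (unpair p).1) //= big1.
    rewrite addr0 mxE eqxx /= eq_sym.
    by case: eqP => // ->.
  by move=> j /negbTE hj; rewrite mxE eq_sym hj.
apply: psd_sum => j _.
exact: (psd_pullback (fun p => (unpair p).1 == j) (fun p => (unpair p).2) (h j)).
Qed.

Lemma Dg_mul k b (nu mu : 'I_k -> 'M[C]_b) :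
  Dg nu *m Dg mu = Dg (fun j => nu j *m mu j).
Proof.
apply/matrixP => p q; case/mxvec_indexP: p => j s; case/mxvec_indexP: q => j' t.
rewrite -[mxvec_index j s]/(pidx j s) -[mxvec_index j' t]/(pidx j' t).
rewrite DgE mxE sum_pidx (bigD1 j) //= [X in _ + X]big1 => [|j2 /negbTE hj]; last first.
  by apply: big1 => s2 _; rewrite DgE eq_sym hj mul0r.
rewrite addr0; case: (eqVneq j j') => [<-|hjj].
  by rewrite mxE; apply: eq_bigr => s2 _; rewrite !DgE !eqxx.
by apply: big1 => s2 _; rewrite !DgE eqxx (negbTE hjj) mulr0.
Qed.

Lemma Dg_tr k b (nu : 'I_k -> 'M[C]_b) : \tr (Dg nu) = \sum_j \tr (nu j).
Proof.
rewrite /mxtrace sum_pidx; apply: eq_bigr => j _; apply: eq_bigr => s _.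
by rewrite DgE eqxx.
Qed.

Lemma Dg1 k b : Dg (fun _ : 'I_k => 1%:M : 'M[C]_b) = 1%:M.
Proof.
apply/matrixP => p q; case/mxvec_indexP: p => j s; case/mxvec_indexP: q => j' t.
rewrite -[mxvec_index j s]/(pidx j s) -[mxvec_index j' t]/(pidx j' t).
rewrite DgE mxE mxE pidx_eq.
by case: (eqVneq j j') => //=; case: (s == t).
Qed.

Lemma DgB k b (nu mu : 'I_k -> 'M[C]_b) : Dg nu - Dg mu = Dg (fun j => nu j - mu j).
Proof.
apply/matrixP => p q; rewrite !mxE; case: eqP => _; rewrite ?mxE ?subr0 //.
Qed.


Definition Om a b (rho : 'M[C]_(a * b)) (Y : 'M[C]_a) : 'M[C]_b :=
  \matrix_(s, t) \sum_i \sum_i' Y i i' * rho (pidx i' s) (pidx i t).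

Lemma psd_Om a b (rho : 'M[C]_(a * b)) (Y : 'M[C]_a) :
  psd rho -> psd Y -> psd (Om rho Y).
Proof. move=> h1 h2; exact: (psd_omega (fun i s => pidx i s) h1 h2). Qed.

Lemma ptrace_Om a b (rho : 'M[C]_(a * b)) (Y : 'M[C]_a) :
  ptraceA (tensmx' Y 1%:M *m rho) = Om rho Y.
Proof.
apply/matrixP => s t; rewrite !mxE; apply: eq_bigr => i _.
rewrite mxE sum_pidx; apply: eq_bigr => i' _.
rewrite (bigD1 s) //= big1 => [|s' hs]; last first.
  by rewrite mxE !unpair_pidx /= mxE eq_sym (negbTE hs) mulr0 mul0r.
by rewrite addr0 mxE !unpair_pidx /= mxE eqxx mulr1.
Qed.

Lemma ptrace_Om1 a b (rho : 'M[C]_(a * b)) : ptraceA rho = Om rho 1%:M.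
Proof.
apply/matrixP => s t; rewrite !mxE; apply: eq_bigr => i _.
rewrite (bigD1 i) //= big1 => [|i' hi]; last by rewrite mxE eq_sym (negbTE hi) mul0r.
by rewrite addr0 mxE eqxx mul1r.
Qed.

Lemma OmB a b (rho : 'M[C]_(a * b)) (Y1 Y2 : 'M[C]_a) :
  Om rho (Y1 - Y2) = Om rho Y1 - Om rho Y2.
Proof.
apply/matrixP => s t; rewrite !mxE -sumrB; apply: eq_bigr => i _.
rewrite -sumrB; apply: eq_bigr => i' _; rewrite !mxE; ring.
Qed.

Lemma Om_sum a b k (rho : 'M[C]_(a * b)) (Y : 'I_k -> 'M[C]_a) :
  Om rho (\sum_j Y j) = \sum_j Om rho (Y j).
Proof.
apply/matrixP => s t; rewrite [RHS]summxE mxE.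
rewrite (eq_bigr (fun j => \sum_i \sum_i' Y j i i' * rho (pidx i' s) (pidx i t))); last first.
  by move=> j _; rewrite mxE.
rewrite [RHS]exchange_big; apply: eq_bigr => i _.
rewrite [RHS]exchange_big; apply: eq_bigr => i' _.
by rewrite summxE mulr_suml.
Qed.

Lemma sigma_Dg a b k (X : 'I_k -> 'M[C]_a) (rho : 'M[C]_(a * b)) :
  ampl_right (measch X) rho = Dg (fun j => Om rho (X j)).
Proof.
apply/matrixP => p q; case/mxvec_indexP: p => j s; case/mxvec_indexP: q => j' t.
rewrite -[mxvec_index j s]/(pidx j s) -[mxvec_index j' t]/(pidx j' t).
rewrite DgE mxE !unpair_pidx /= mxE; case: eqP => // _.
rewrite mxE; apply: eq_bigr => i _; rewrite mxE; apply: eq_bigr => i' _.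
by rewrite mxE.
Qed.

Lemma ptraceA_Dg k b (nu : 'I_k -> 'M[C]_b) : ptraceA (Dg nu) = \sum_j nu j.
Proof.
apply/matrixP => s t; rewrite !mxE summxE; apply: eq_bigr => j _.
by rewrite DgE eqxx.
Qed.

Lemma tens1_Dg k b (M : 'M[C]_b) : tensmx' (1%:M : 'M[C]_k) M = Dg (fun _ => M).
Proof.
apply/matrixP => p q; case/mxvec_indexP: p => j s; case/mxvec_indexP: q => j' t.
rewrite -[mxvec_index j s]/(pidx j s) -[mxvec_index j' t]/(pidx j' t).
rewrite DgE mxE !unpair_pidx /= mxE.
by case: eqP => _; rewrite ?mul1r ?mul0r.
Qed.

Lemma tr_Om1 a b (rho : 'M[C]_(a * b)) : \tr (Om rho 1%:M) = \tr rho.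
Proof. by rewrite -ptrace_Om1 /mxtrace sum_pidx exchange_big; apply: eq_bigr => s _; rewrite mxE. Qed.


Lemma tr_psd_mul n (A B : 'M[C]_n) : psd A -> psd B -> 0 <= \tr (A *m B).
Proof.
move=> /psd_factor [K ->] hB.
rewrite -mulmxA mxtrace_mulC.
have := psd_tr (psd_congr (adjmx K) hB).
by rewrite adjmxK.
Qed.

Lemma orth_mul n (M N : 'M[C]_n) : psd M -> orth_supp M N -> M *m N = 0.
Proof.
move=> hM ho; apply/matrixP => s t.
have := ho (Pg xpredT (fun _ : 'I_1 => s)) (Pg xpredT (fun _ : 'I_1 => t)).
rewrite adjmxM hM.1 !mulmxA -(mulmxA _ M N) => /matrixP /(_ 0 0).
by rewrite Pg_sel /= !mxE.
Qed.

Lemma proj_exists n (nu : 'M[C]_n) : psd nu ->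
  exists P M : 'M[C]_n, [/\ adjmx P = P, P *m P = P, P *m nu = nu,
                            P = nu *m M & P = M *m nu].
Proof.
move=> hnu; have hn : nu \is normalmx.
  by apply/normalmxP; rewrite tstar_adj hnu.1.
have := orthomx_spectralP hn.
set U := spectralmx nu; set d := spectral_diag nu => eY.
have Uu : U \is unitarymx := spectral_unitarymx nu.
have eU : invmx U = adjmx U by rewrite invmx_unitary // tstar_adj.
rewrite eU in eY.
have UU : U *m adjmx U = 1%:M by have /unitarymxP := Uu; rewrite tstar_adj.
have cj : forall A B : 'M[C]_n, (adjmx U *m A *m U) *m (adjmx U *m B *m U) =
    adjmx U *m (A *m B) *m U.
  by move=> A B; rewrite !mulmxA -(mulmxA _ U) UU mulmx1 ?mulmxA.
pose e := \row_l ((d 0 l != 0)%:R : C).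
pose di := \row_l ((d 0 l)^-1 : C).
exists (adjmx U *m diag_mx e *m U), (adjmx U *m diag_mx di *m U).
have ed : diag_mx d *m diag_mx di = diag_mx e.
  rewrite mulmx_diag; congr diag_mx; apply/rowP => l; rewrite !mxE.
  by case: eqP => [->|/eqP h]; rewrite ?mul0r // mulfV.
have de : diag_mx di *m diag_mx d = diag_mx e by rewrite diag_mxC.
split.
- rewrite (adjmxM (adjmx U *m diag_mx e) U) (adjmxM (adjmx U) (diag_mx e)) adjmxK mulmxA; congr (_ *m _ *m _).
  apply/matrixP => i j; rewrite adjmxE !mxE eq_sym.
  case: (eqVneq j i) => [->|_]; last by rewrite !mulr0n rmorph0.
  by rewrite !mulr1n eq_sym; case: (d 0 i != 0); rewrite /= ?rmorph0 ?rmorph1.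
- rewrite (cj (diag_mx e) (diag_mx e)) mulmx_diag; congr (_ *m diag_mx _ *m _); apply/rowP => l; rewrite !mxE.
  by case: (_ != 0); rewrite ?mulr1 ?mulr0.
- rewrite {1}eY (cj (diag_mx e) (diag_mx d)) mulmx_diag eY; congr (_ *m diag_mx _ *m _); apply/rowP => l; rewrite !mxE.
  by case: eqP => [->|_]; rewrite ?mulr0 ?mul1r.
- by rewrite eY (cj (diag_mx d) (diag_mx di)) ed.
- by rewrite eY (cj (diag_mx di) (diag_mx d)) de.
Qed.


Definition e00 : 'M[C]_(1 + 1) := \matrix_(i, j) ((i == ord0) && (j == ord0))%:R.
Definition e11 : 'M[C]_(1 + 1) := \matrix_(i, j) ((i == ord_max) && (j == ord_max))%:R.

Lemma e_block (x y : C) : x *: e00 + y *: e11 = block_mx x%:M 0 0 y%:M.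
Proof.
set Z := x *: e00 + y *: e11.
transitivity (block_mx (ulsubmx Z) (ursubmx Z) (dlsubmx Z) (drsubmx Z)).
  exact: (esym (submxK Z)).
congr block_mx; apply/matrixP => i j; rewrite !mxE (ord1 i) (ord1 j) /=;
  by rewrite ?mulr1 ?mulr0 ?addr0 ?add0r ?mulr1n.
Qed.

Definition Phi N (A B : 'M[C]_N) (M : 'M[C]_N) : 'M[C]_(1 + 1) :=
  \tr (A *m M) *: e00 + \tr (B *m M) *: e11.

Lemma cptp_Phi N (A B : 'M[C]_N) : psd A -> psd B -> A + B = 1%:M -> cptp (Phi A B).
Proof.
move=> hA hB hAB; split.
- move=> c X Y; rewrite /Phi !mulmxDr !mxtraceD -!scalemxAr !mxtraceZ !scalerDl -!scalerA.
  by rewrite scalerDr addrACA.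
- move=> k P hP.
  pose OmT (Z : 'M[C]_N) : 'M[C]_k := \matrix_(s, t) \sum_r \sum_r' Z r r' * P (pidx s r') (pidx t r).
  have hO : forall Z, psd Z -> psd (OmT Z).
    by move=> Z hZ; exact: (psd_omega (fun r s => pidx s r) hP hZ).
  have -> : ampl_left (Phi A B) P =
    \matrix_(p, q) (if ((unpair p).2 == ord0) && ((unpair q).2 == ord0)
                    then OmT A (unpair p).1 (unpair q).1 else 0)
  + \matrix_(p, q) (if ((unpair p).2 == ord_max) && ((unpair q).2 == ord_max)
                    then OmT B (unpair p).1 (unpair q).1 else 0).
    apply/matrixP => p q; rewrite !mxE.
    have trE : forall Z : 'M[C]_N, \tr (Z *m \matrix_(i, j) P (pidx (unpair p).1 i) (pidx (unpair q).1 j))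
        = OmT Z (unpair p).1 (unpair q).1.
      move=> Z; rewrite /mxtrace mxE; apply: eq_bigr => r _; rewrite mxE.
      by apply: eq_bigr => r' _; rewrite mxE.
    rewrite !trE.
    have h2 : forall i : 'I_(1 + 1), (i == ord0) = ~~ (i == ord_max).
      by case=> -[|[|]].
    rewrite !h2.
    case: ((unpair p).2 == ord_max); case: ((unpair q).2 == ord_max);
    by rewrite /= /OmT ?mxE ?mulr1 ?mulr0 ?addr0 ?add0r.
  by apply: psdD; [apply: (psd_pullback (fun p => (unpair p).2 == ord0) (fun p => (unpair p).1) (hO _ hA))
                  | apply: (psd_pullback (fun p => (unpair p).2 == ord_max) (fun p => (unpair p).1) (hO _ hB))].
- move=> X; rewrite /Phi e_block mxtrace_block !mxtrace_scalar !mulr1n.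
  by rewrite -mxtraceD -mulmxDl hAB mul1mx.
Qed.


Lemma tr_sum k n (F : 'I_k -> 'M[C]_n) : \tr (\sum_j F j) = \sum_j \tr (F j).
Proof. by apply: big_morph; [exact: mxtraceD | exact: mxtrace0]. Qed.

Lemma psd_proj n (Q : 'M[C]_n) : adjmx Q = Q -> Q *m Q = Q -> psd Q /\ psd (1%:M - Q).
Proof.
move=> hQ hQQ; split.
  by have := psd_adjK Q; rewrite hQ hQQ.
have := psd_adjK (1%:M - Q).
have -> : adjmx (1%:M - Q) = 1%:M - Q by rewrite adjmxD adjmxN adjmx1 hQ.
by rewrite mulmxBl !mulmxBr !mul1mx mulmx1 hQQ subrr subr0.
Qed.

Lemma psd_scalar1 (x : C) : 0 <= x -> psd (x%:M : 'M[C]_1).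
Proof. by move=> hx; rewrite -scalemx1; apply: psd_scale => //; exact: psd1. Qed.

Lemma trB n (M N : 'M[C]_n) : \tr (M - N) = \tr M - \tr N.
Proof. by rewrite /mxtrace -sumrB; apply: eq_bigr => i _; rewrite !mxE. Qed.

Lemma density1 : density (1%:M : 'M[C]_1).
Proof. by split; [exact: psd1 | rewrite mxtrace1]. Qed.

End Aux.

Unset Implicit Arguments.

Theorem lemma10 (R : realType) (bs : R) (hbs0 : 0 < bs) (hbs1 : bs != 1)
  (D : relEnt R)
  (hA : propA D) (hB : propB D) (hC : propC bs D) (hD : propD D)
  (form : bool) (a b k : nat) (X : 'I_k -> 'M[R[i]]_a) (rho : 'M[R[i]]_(a * b)) :
  povm X -> density rho ->
  (0 <= condEntX D form X rho)%E /\
  ((forall j j' : 'I_k, j != j' ->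
      orth_supp (ptraceA (tensmx' (X j) 1%:M *m rho))
                (ptraceA (tensmx' (X j') 1%:M *m rho))) ->
   condEntX D form X rho = 0%E).
Proof.
move=> [hXpsd hXsum] [hrho htr].
set sig := ampl_right (measch X) rho.
set om := fun j => Om rho (X j).
have esig : sig = Dg om := sigma_Dg X rho.
set rB := Om rho 1%:M.
have hom : forall j, psd (om j) by move=> j; exact: psd_Om hrho (hXpsd j).
have hsum : \sum_j om j = rB by rewrite /rB -hXsum Om_sum.
have hptr : ptraceA sig = rB by rewrite esig ptraceA_Dg hsum.
have hsig : psd sig by rewrite esig; exact: psd_Dg.
have hrB : psd rB := psd_Om hrho (psd1 _ a).
have trrB : \tr rB = 1 by rewrite /rB tr_Om1.
have trsig : \tr sig = 1 by rewrite esig Dg_tr -tr_sum hsum.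
have densrB : density rB by [].
have dsig : density sig by [].
have claim1 : (D _ sig (tensmx' 1%:M rB) <= 0)%E.
  rewrite -(hD _ sig dsig); apply: antimono => //.
  rewrite tens1_Dg esig DgB; apply: psd_Dg => j.
  rewrite /rB /om -OmB; apply: psd_Om => //.
  have -> : 1%:M - X j = \sum_(l | l != j) X l.
    by rewrite -hXsum (bigD1 j) //= addrAC subrr add0r.
  by apply: psd_sum => l _.
have claim2 : (forall j j' : 'I_k, j != j' ->
      orth_supp (ptraceA (tensmx' (X j) 1%:M *m rho))
                (ptraceA (tensmx' (X j') 1%:M *m rho))) ->
    forall sB : 'M[R[i]]_b, density sB -> (0 <= D _ sig (tensmx' 1%:M sB))%E.
  move=> horth sB [hsB trsB].
  have [P hP0] := fin_all_exists (fun j => proj_exists (hom j)).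
  have [Mf hPj] := fin_all_exists hP0.
  have hPP : forall j j', j != j' -> P j *m P j' = 0.
    move=> j j' hjj; case: (hPj j) => _ _ _ _ ->; case: (hPj j') => _ _ _ -> _.
    have : om j *m om j' = 0.
      apply: orth_mul; first exact: hom.
      by have := horth j j' hjj; rewrite !ptrace_Om.
    by rewrite mulmxA -(mulmxA _ (om j)) => ->; rewrite mulmx0 mul0mx.
  have hPpsd : forall j, psd (P j) /\ psd (1%:M - P j).
    by move=> j; case: (hPj j) => h1 h2 _ _ _; exact: psd_proj.
  set A := Dg P; set Bm := Dg (fun j => 1%:M - P j).
  have eBm : Bm = 1%:M - A by rewrite /Bm /A -DgB Dg1.
  have hApsd : psd A by apply: psd_Dg => j; case: (hPpsd j).
  have hBpsd : psd Bm by apply: psd_Dg => j; case: (hPpsd j).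
  have hAB : A + Bm = 1%:M by rewrite eBm addrC subrK.
  have cp := cptp_Phi hApsd hBpsd hAB.
  set tau := tensmx' 1%:M sB.
  have etau : tau = Dg (fun _ => sB) by rewrite /tau tens1_Dg.
  have htau : psd tau by rewrite etau; apply: psd_Dg.
  have trAs : \tr (A *m sig) = 1.
    rewrite esig /A Dg_mul Dg_tr -trsig esig Dg_tr; apply: eq_bigr => j _.
    by case: (hPj j) => _ _ -> _ _.
  have trBs : \tr (Bm *m sig) = 0.
    by rewrite eBm mulmxBl mul1mx trB trAs trsig subrr.
  set q := \tr (A *m tau).
  have hq0 : 0 <= q by apply: tr_psd_mul.
  have hr0 : 0 <= \tr (Bm *m tau) by apply: tr_psd_mul.
  have eq : q = \tr ((\sum_j P j) *m sB).
    rewrite /q etau /A Dg_mul Dg_tr mulmx_suml tr_sum; apply: eq_bigr => j _ //.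
  have hQ : psd (1%:M - \sum_j P j).
    apply: (proj2 (psd_proj _ _)).
      rewrite (big_morph _ (@adjmxD _ _ _) (@adjmx0 _ _ _)); apply: eq_bigr => j _.
      by case: (hPj j).
    rewrite mulmx_suml; apply: eq_bigr => j _; rewrite mulmx_sumr (bigD1 j) //= big1.
      by rewrite addr0; case: (hPj j).
    by move=> j' hj'; rewrite hPP // eq_sym.
  have hq1 : 0 <= 1 - q.
    by rewrite eq -trsB -trB -{1}(mul1mx sB) -mulmxBl; apply: tr_psd_mul.
  have PhiS : Phi A Bm sig = block_mx 1%:M 0 0 0.
    by rewrite /Phi trAs trBs e_block raddf0.
  have PhiT : Phi A Bm tau = block_mx q%:M 0 0 (\tr (Bm *m tau))%:M.
    by rewrite /Phi e_block.
  have step1 := hA _ _ (Phi A Bm) sig tau cp hsig htau.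
  rewrite PhiS PhiT hB in step1; last first.
  - exact: psd_scalar1.
  - exact: psd_scalar1.
  - exact: psd1.
  apply: le_trans step1.
  rewrite -(hD _ _ (density1 R)); apply: antimono => //.
  - exact: psd1.
  - exact: psd_scalar1.
  - have -> : (1%:M - q%:M : 'M[R[i]]_1) = (1 - q)%:M.
      by apply/matrixP => i j; rewrite !mxE mulrnBl.
    exact: psd_scalar1.
  rewrite /condEntX -/sig /condEnt.
have p1 : (0 <= - D _ sig (tensmx' 1%:M rB))%E by rewrite oppe_ge0.
case: form.
- rewrite hptr; split => // horth.
  apply/eqP; rewrite eq_le p1 andbT oppe_le0; exact: claim2.
- have p1' : (0 <= ereal_sup [set (- D (k * b)%N sig (tensmx' 1%:M sigma))%E
                 | sigma in [set sigma : 'M[R[i]]_b | density sigma]])%E.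
    by apply: le_trans p1 _; apply: ereal_sup_ubound; exists rB.
  split => // horth.
  apply/eqP; rewrite eq_le p1' andbT; apply: ge_ereal_sup => y [s0 hs0 <-].
  rewrite oppe_le0; exact: claim2.
Qed.
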